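(* Let $\mathcal{H}$ be a hypertree, $T$ a host tree of $\mathcal{H}$, and $B$ a basic set of $\mathcal{H}$. Let $\Gamma_{B,T}$ be the graph with vertex set $A(B)$ in which two distinct components $A_1,A_2\in A(B)$ are adjacent if and only if $T$ has an edge $e$ with $I_\mathcal{H}(e)=B$ having one endpoint in $A_1$ and the other in $A_2$. Then $\Gamma_{B,T}$ is a tree.
   Context: A hypergraph $\mathcal{H}$ has a finite vertex set $V(\mathcal{H})$ and a finite family of nonempty subsets (edges). A host tree is a tree on $V(\mathcal{H})$ in which every edge induces a connected subgraph; a hypertree is a hypergraph with a host tree. For $V'\subseteq V(\mathcal{H})$, $I_\mathcal{H}(V')$ is the intersection of all edges containing $V'$, or $V(\mathcal{H})$ if none does; for a tree edge $e=xy$, $I_\mathcal{H}(e)=I_\mathcal{H}(\{x,y\})$. For $A\subseteq V(\mathcal{H})$, $\overline{\mathcal{H}_A}$ is the hypergraph on $V(\mathcal{H})$ whose edges are the edges of $\mathcal{H}$ not containing $A$. The 2-section of a hypergraph is the graph on its vertices where two distinct vertices are adjacent iff some edge contains both. $A(B)$ is the set of connected components of the 2-section of $\overline{\mathcal{H}_B}$ containing at least one vertex of $B$. A union of sets is connected if the intersection graph of the sets is connected. $Comp(\mathcal{H})$ is the hypergraph without repeated edges on $V(\mathcal{H})$ whose edges are $V(\mathcal{H})$, all singletons, and all proper subsets obtainable from edges of $\mathcal{H}$ by repeated nonempty intersections and connected unions; a basic set is an edge of $Comp(\mathcal{H})$ with more than one vertex that is not a connected union of strictly smaller edges of $Comp(\mathcal{H})$.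 *)

(* Defs.v *)
From mathcomp Require Import all_boot.
Set Implicit Arguments. Unset Strict Implicit. Unset Printing Implicit Defensive.

Section Hyper.
Variable V : finType.

(* A hypergraph on vertex set V (the whole finite type) is a finite family
   (a list, repetitions allowed) of edges. *)

Definition edges_nonempty (H : seq {set V}) : Prop :=
  forall E, E \in H -> E != set0.

Definition simple_graph (g : rel V) : Prop :=
  (forall x, ~~ g x x) /\ (forall x y, g x y = g y x).

Definition restrict_rel (U : finType) (S : {set U}) (g : rel U) : rel U :=
  [rel x y | [&& g x y, x \in S & y \in S]].

Definition connected_on (U : finType) (S : {set U}) (g : rel U) : Prop :=
  forall x y, x \in S -> y \in S -> connect (restrict_rel S g) x y.

Definition acyclic_on (U : finType) (S : {set U}) (g : rel U) : Prop :=
  forall c : seq U, all (mem S) c -> uniq c -> 3 <= size c -> ~~ cycle g c.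

Definition is_tree_on (U : finType) (S : {set U}) (g : rel U) : Prop :=
  [/\ S != set0, connected_on S g & acyclic_on S g].

Definition host_tree (H : seq {set V}) (t : rel V) : Prop :=
  [/\ simple_graph t, is_tree_on [set: V] t &
      forall E, E \in H -> connected_on E t].

Definition hypertree (H : seq {set V}) : Prop := exists t, host_tree H t.

(* I_H(V'): intersection of all edges containing V' (V(H) if none). *)
Definition I_H (H : seq {set V}) (W : {set V}) : {set V} :=
  \bigcap_(E <- H | W \subset E) E.

Definition I_edge (H : seq {set V}) (x y : V) : {set V} := I_H H [set x; y].

Definition H_bar (H : seq {set V}) (A : {set V}) : seq {set V} :=
  filter (fun E : {set V} => ~~ (A \subset E)) H.

Definition two_section (H : seq {set V}) : rel V :=
  [rel x y : V | (x != y) && has (fun E : {set V} => (x \in E) && (y \in E)) H].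

Definition component (g : rel V) (x : V) : {set V} := [set y | connect g x y].

Definition A_of (H : seq {set V}) (B : {set V}) : {set {set V}} :=
  [set component (two_section (H_bar H B)) x | x in B].

Definition inter_rel : rel {set V} := [rel X Y | (X != Y) && (X :&: Y != set0)].

Definition family_connected (F : {set {set V}}) : Prop :=
  connected_on F inter_rel.

Inductive obtainable (H : seq {set V}) : {set V} -> Prop :=
| ob_edge E : E \in H -> obtainable H E
| ob_inter (F : {set {set V}}) :
    F != set0 -> (forall X, X \in F -> obtainable H X) ->
    \bigcap_(X in F) X != set0 -> obtainable H (\bigcap_(X in F) X)
| ob_union (F : {set {set V}}) :
    F != set0 -> (forall X, X \in F -> obtainable H X) ->
    family_connected F -> obtainable H (\bigcup_(X in F) X).

Definition comp_edge (H : seq {set V}) (X : {set V}) : Prop :=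
  X = [set: V] \/ #|X| = 1 \/ (obtainable H X /\ X \proper [set: V]).

Definition basic_set (H : seq {set V}) (B : {set V}) : Prop :=
  [/\ comp_edge H B, 1 < #|B| &
      ~ exists F : {set {set V}},
          [/\ forall X, X \in F -> comp_edge H X /\ X \proper B,
              family_connected F & \bigcup_(X in F) X = B]].

Definition Gamma_rel (H : seq {set V}) (t : rel V) (B : {set V}) : rel {set V} :=
  [rel A1 A2 : {set V} | (A1 != A2) &&
     [exists x, exists y, [&& t x y, I_edge H x y == B, x \in A1 & y \in A2]]].

End Hyper.

(* Main.v *)
Require Import Defs.
From mathcomp Require Import all_boot.
Set Implicit Arguments. Unset Strict Implicit. Unset Printing Implicit Defensive.

Lemma conn_ind (T : finType) (e : rel T) (P : T -> Prop) x y :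
  (forall a b, e a b -> P a -> P b) -> P x -> connect e x y -> P y.
Proof.
move=> step Px /connectP [p pth ->]; elim: p x Px pth => [|z p IH] x Px //=.
case/andP=> exz pth; exact: IH (step _ _ exz Px) pth.
Qed.

Section Pf.
Variable V : finType.
Variable t : rel V.
Hypothesis tirr : forall x, ~~ t x x.
Hypothesis tsym : forall x y, t x y = t y x.
Hypothesis tconn : connected_on [set: V] t.
Hypothesis tacyc : acyclic_on [set: V] t.

Definition tm (u v : V) : rel V := [rel a b | t a b && ([set a; b] != [set u; v])].

Lemma tm_sym u v : connect_sym (tm u v).
Proof. apply: sym_connect_sym => a b; rewrite /tm /=. by rewrite tsym setUC. Qed.

Lemma set2_neq (S : {set V}) u v p q :
  ~~ ((u \in S) && (v \in S)) -> p \in S -> q \in S -> [set p; q] != [set u; v].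
Proof.
move=> nuv pS qS; apply/negP => /eqP E; move/negP: nuv; apply.
have: u \in [set p; q] by rewrite E set21.
have: v \in [set p; q] by rewrite E set22.
by rewrite !inE => /orP[/eqP->|/eqP->] /orP[/eqP->|/eqP->]; rewrite ?pS ?qS.
Qed.

Lemma connect_restrict_tm (S : {set V}) (u v a b : V) : ~~ ((u \in S) && (v \in S)) ->
  connect (restrict_rel S t) a b -> connect (tm u v) a b.
Proof.
move=> nuv; apply: connect_sub => x y /= /and3P [txy xS yS]; apply: connect1.
by rewrite /tm /= txy (set2_neq nuv xS yS).
Qed.

Definition onesided u v (X : {set V}) :=
  forall a b, a \in X -> b \in X -> connect (tm u v) a b.

Lemma conn_onesided (S : {set V}) (u v : V) : connected_on S t -> ~~ ((u \in S) && (v \in S)) ->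
  onesided u v S.
Proof. move=> cS nuv a b aS bS; exact: connect_restrict_tm nuv (cS a b aS bS). Qed.

Lemma sep_edge u v : t u v -> ~~ connect (tm u v) u v.
Proof.
move=> tuv; apply/negP => /connectP [p pth lst].
move: lst; case: (shortenP pth) => {pth} p pth uq _ lst.
have uv : u != v by apply/eqP=> E; move: tuv; rewrite E (negbTE (tirr v)).
have sub : subrel (tm u v) t by move=> a b /andP[].
case: p pth uq lst => [|w [|w2 p3]] pth uq lst.
- by move: uv; rewrite lst eqxx.
- by simpl in lst; subst w; move: pth; rewrite /= /tm /= eqxx andbF.
- have := tacyc (c := u :: w :: w2 :: p3) _ uq.
  rewrite /cycle rcons_path (sub_path sub pth) /=.
  have -> : last w2 p3 = v by rewrite lst.
  rewrite tsym tuv => H0; suff: false by []; apply: H0 => //.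
  by rewrite !inE /=; apply/allP => x _; rewrite inE.
Qed.

Definition Sep (X : {set V}) :=
  forall u v, t u v -> ~~ ((u \in X) && (v \in X)) -> onesided u v X.

Lemma path_tm u v c x s : c \notin x :: s -> c \in [set u; v] ->
  path t x s -> path (tm u v) x s.
Proof.
move=> cn cuv; elim: s x cn => [|y s IH] x cn //=.
have cx : c != x by apply: contra cn => /eqP->; exact: mem_head.
have cn' : c \notin y :: s by by apply: contra cn => H0; rewrite inE H0 orbT.
have cy : c != y by apply: contra cn' => /eqP->; exact: mem_head.
case/andP=> txy pth; rewrite IH // andbT /tm /= txy /=.
apply/eqP=> E; move: cuv; by rewrite -E !inE (negbTE cx) (negbTE cy).
Qed.

Lemma sep_connected X : Sep X -> connected_on X t.
Proof.
move=> sX a b aX bX.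
have /connectP [p pth lst] : connect t a b.
  move: (tconn (in_setT a) (in_setT b)); apply: connect_sub => x y /= /andP[txy _].
  exact: connect1.
move: lst; case: (shortenP pth) => {pth} p pth uq _ lst.
apply/connectP; exists p => //.
suff allX : all (mem X) p.
  elim: p a aX pth allX {uq lst} => [|y p IH] a aX //= /andP[tay pth] /andP[yX allX].
  by rewrite /restrict_rel /= tay aX yX /= -/(restrict_rel X t) IH.
apply/allP => w wp; apply: contraT => wX.
move: pth uq lst; case/splitPr: wp => p1 p2.
rewrite cat_path /= => /and3P [pth1 tuw pth2] uq lst.
set u := last a p1 in pth1 tuw pth2 lst.
have : uniq ((a :: p1) ++ w :: p2) by [].
rewrite cat_uniq => /and3P [_ /hasPn Hn _].
have wn : w \notin a :: p1 by exact: Hn w (mem_head _ _).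
have un : u \notin w :: p2.
  apply/negP => uin; move: (Hn u uin); rewrite /u mem_last //.
have nuw : ~~ ((u \in X) && (w \in X)).
  by apply/negP => /andP[_ wX']; exact: (negP wX) wX'.
have ab := sX u w tuw nuw a b aX bX.
have ua : connect (tm u w) a u.
  apply/connectP; exists p1 => //; apply: path_tm wn _ pth1; exact: set22.
have wb : connect (tm u w) w b.
  apply/connectP; exists p2; first by apply: path_tm un _ pth2; exact: set21.
  by rewrite lst last_cat.
have := sep_edge tuw; rewrite (connect_trans _ (connect_trans ab _)) //.
  by rewrite tm_sym.
by rewrite tm_sym.
Qed.

Lemma union_onesided u v (F : {set {set V}}) :
  family_connected F -> (forall X, X \in F -> onesided u v X) ->
  onesided u v (\bigcup_(X in F) X).
Proof.
move=> Fc F1 a b /bigcupP [X XF aX] /bigcupP [Y YF bY].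
move: (Fc X Y XF YF) => cXY.
pose P := fun Z : {set V} => forall z, z \in Z -> connect (tm u v) a z.
have base : P X by move=> z zX; exact: F1 X XF a z aX zX.
have step : forall Z Z', restrict_rel F (@inter_rel V) Z Z' -> P Z -> P Z'.
  move=> Z Z' /and3P [/andP[_ ne] ZF Z'F] PZ z zZ'.
  case/set0Pn: ne => p /setIP [pZ pZ'].
  exact: connect_trans (PZ p pZ) (F1 _ Z'F p z pZ' zZ').
exact: (conn_ind step base cXY b bY).
Qed.

Variable H : seq {set V}.
Hypothesis Hconn : forall E, E \in H -> connected_on E t.

Definition NI (X : {set V}) :=
  forall u v, t u v -> u \in X -> v \in X -> I_edge H u v \subset X.

Lemma I_edge_sub E u v : E \in H -> u \in E -> v \in E -> I_edge H u v \subset E.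
Proof.
move=> EH uE vE; rewrite /I_edge /I_H (big_rem E) //=.
have -> : [set u; v] \subset E by rewrite subUset !sub1set uE vE.
exact: subsetIl.
Qed.

Lemma obt_inv X : obtainable H X -> Sep X /\ NI X.
Proof.
elim=> [E EH | F Fn _ IH ne | F Fn _ IH Fc].
- split.
  + move=> u v _ nuv; exact: conn_onesided (Hconn EH) nuv.
  + move=> u v _ uE vE; exact: I_edge_sub.
- split.
  + move=> u v tuv nuv.
    case: (boolP [exists Z in F, ~~ ((u \in Z) && (v \in Z))]).
      case/exists_inP => Z ZF nZ a b /bigcapP aI /bigcapP bI.
      exact: (IH Z ZF).1 u v tuv nZ a b (aI Z ZF) (bI Z ZF).
    move/exists_inPn => all; case/negP: nuv; apply/andP; split; apply/bigcapP => Z ZF;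
      by have := all Z ZF; rewrite negbK => /andP[].
  + move=> u v tuv /bigcapP uI /bigcapP vI; apply/bigcapsP => Z ZF.
    exact: (IH Z ZF).2 u v tuv (uI Z ZF) (vI Z ZF).
- split.
  + move=> u v tuv nuv; apply: union_onesided => // Z ZF.
    apply: (IH Z ZF).1 tuv _; apply: contra nuv => /andP[uZ vZ].
    by apply/andP; split; apply/bigcupP; exists Z.
  + move=> u v tuv uU vU.
    case: (boolP [exists Z in F, (u \in Z) && (v \in Z)]).
      case/exists_inP => Z ZF /andP[uZ vZ].
      apply: subset_trans ((IH Z ZF).2 u v tuv uZ vZ) _.
      exact: (bigcup_sup _ ZF).
    move/exists_inPn => all.
    have os : onesided u v (\bigcup_(X in F) X).
      apply: union_onesided => // Z ZF; exact: (IH Z ZF).1 u v tuv (all Z ZF).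
    by have := sep_edge tuv; rewrite os.
Qed.

Section Main.
Variable B : {set V}.
Hypothesis connB : connected_on B t.
Hypothesis NB : NI B.
Hypothesis B0 : B != set0.

Let g := two_section (H_bar H B).
Let comp := component g.

Lemma gsym : connect_sym g.
Proof.
apply: sym_connect_sym => x y; rewrite /g /two_section /= eq_sym; congr (_ && _).
by apply: eq_has => E /=; rewrite andbC.
Qed.

Lemma compE C x : C \in A_of H B -> x \in C -> C = comp x.
Proof.
case/imsetP => z _ ->; rewrite inE => zx; apply/setP => w.
by rewrite !inE (same_connect gsym zx).
Qed.

Lemma comp_in x : x \in B -> comp x \in A_of H B.
Proof. move=> xB; exact: imset_f. Qed.

Lemma comp_self x : x \in comp x.
Proof. by rewrite inE connect0. Qed.

Lemma comp_onesided C u v : C \in A_of H B -> ~~ ((u \in C) && (v \in C)) ->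
  onesided u v C.
Proof.
case/imsetP => z _ -> nuv.
have key : forall a, a \in component g z -> connect (tm u v) z a.
  move=> a; rewrite inE => za.
  pose P := fun a => connect g z a /\ connect (tm u v) z a.
  have step : forall a b, g a b -> P a -> P b.
    move=> a' b' gab [za' tza]; split; first exact: connect_trans za' (connect1 gab).
    move: gab; rewrite /g /two_section /= => /andP[_ /hasP [E EHb /andP[aE bE]]].
    have EH : E \in H by move: EHb; rewrite mem_filter => /andP[].
    have EC : E \subset component g z.
      apply/subsetP => e eE; rewrite inE; apply: connect_trans za' _.
      case: (eqVneq a' e) => [<-|ne]; first exact: connect0.
      apply: connect1; rewrite /g /two_section /= ne /=; apply/hasP; exists E => //.
      by rewrite aE eE.
    have nE : ~~ ((u \in E) && (v \in E)).
      apply: contra nuv => /andP[uE vE].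
      by rewrite (subsetP EC _ uE) (subsetP EC _ vE).
    exact: connect_trans tza (connect_restrict_tm nE (Hconn EH aE bE)).
  by have [] := conn_ind step (conj (connect0 _ _) (connect0 _ _)) za.
move=> a b aC bC; apply: connect_trans (key b bC).
by rewrite tm_sym; exact: key.
Qed.
Lemma B_sub_I z z' : t z z' -> comp z != comp z' -> B \subset I_edge H z z'.
Proof.
move=> tzz ne; rewrite /I_edge /I_H big_seq_cond.
apply: (@big_ind {set V} (fun X => B \subset X) setT (@setI V)) => [|X Y BX BY|E /andP[EH sE]].
- exact: subsetT.
- by rewrite subsetI BX BY.
- case: (boolP (B \subset E)) => // nBE.
  suff ceq : comp z = comp z' by rewrite ceq eqxx in ne.
  have gzz : g z z'.
    rewrite /g /two_section /=; apply/andP; split.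
      by apply/eqP => E0; move: tzz; rewrite E0 (negbTE (tirr _)).
    apply/hasP; exists E; first by rewrite mem_filter nBE EH.
    by move: sE; rewrite subUset !sub1set => /andP[-> ->].
  apply/setP => w; rewrite /comp /component !inE; exact: (same_connect gsym (connect1 gzz) w).
Qed.

Lemma Gamma_connected : connected_on (A_of H B) (Gamma_rel H t B).
Proof.
move=> C1 C2 /imsetP [b1 b1B ->] /imsetP [b2 b2B ->].
pose P := fun z => connect (restrict_rel (A_of H B) (Gamma_rel H t B)) (comp b1) (comp z).
have step : forall z z', restrict_rel B t z z' -> P z -> P z'.
  move=> z z' /and3P [tzz zB z'B] Pz; rewrite /P.
  case: (eqVneq (comp z) (comp z')) => [<-|ne] //.
  apply: connect_trans Pz (connect1 _).
  rewrite /restrict_rel /= comp_in // comp_in // andbT /Gamma_rel /= ne /=.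
  rewrite andbT; apply/existsP; exists z; apply/existsP; exists z'.
  by rewrite tzz !comp_self andbT /= eqEsubset NB // B_sub_I.
exact: (conn_ind step (connect0 _ _) (connB b1B b2B)).
Qed.

Lemma Gamma_acyclic : acyclic_on (A_of H B) (Gamma_rel H t B).
Proof.
move=> c; case: c => [|A1 [|A2 [|A3 q]]] //= call cuniq _.
case/and4P: call => A1in A2in A3in qin.
case/and4P: cuniq => u1 u2 u3 u4.
apply/negP; rewrite /cycle /= => /and3P [g12 g23 pth].
case/andP: (g12) => n12 /existsP [x1 /existsP [y1 /and4P [t1 _ x1A1 y1A2]]].
have eA1 : A1 = comp x1 := compE A1in x1A1.
have eA2 : A2 = comp y1 := compE A2in y1A2.
have os : forall C, C \in A_of H B -> onesided x1 y1 C.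
  move=> C CA; have := comp_onesided CA; apply; apply/negP => /andP[x1C y1C].
  by move: n12; rewrite eA1 eA2 -(compE CA x1C) -(compE CA y1C) eqxx.
have pair : forall w D, D \in A_of H B -> w \in D -> w \in [set x1; y1] -> D \in [:: A1; A2].
  move=> w D DA wD; rewrite (compE DA wD) !inE => /orP[/eqP E|/eqP E].
    by rewrite E -eA1 eqxx.
  by rewrite E -eA2 eqxx orbT.
pose good := fun C : {set V} => forall z, z \in C -> connect (tm x1 y1) y1 z.
have step : forall C C', C \in A_of H B -> C' \in A_of H B -> Gamma_rel H t B C C' ->
    ~~ ((C \in [:: A1; A2]) && (C' \in [:: A1; A2])) -> good C -> good C'.
  move=> C C' CA C'A /andP[_ /existsP [u /existsP [v /and4P [tuv _ uC vC']]]] nC gC z zC'.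
  have tm_uv : tm x1 y1 u v.
    rewrite /tm /= tuv /=; apply/negP => /eqP E.
    move/negP: nC; apply; apply/andP; split.
      by apply: (pair u C CA uC); rewrite -E set21.
    by apply: (pair v C' C'A vC'); rewrite -E set22.
  exact: connect_trans (gC u uC) (connect_trans (connect1 tm_uv) (os C' C'A v z vC' zC')).
have gA2 : good A2 by move=> z zA2; exact: os A2 A2in y1 z y1A2 zA2.
have chain : forall s C, C \in A_of H B -> C \notin [:: A1; A2] -> all (mem (A_of H B)) s ->
    all (fun D => D \notin [:: A1; A2]) s -> path (Gamma_rel H t B) C (rcons s A1) ->
    good C -> good A1.
  elim=> [|D s IH] C CA nC sA sN /=.
    rewrite andbT => gCA1 gC; apply: step CA A1in gCA1 _ gC; by rewrite (negbTE nC).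
  case/andP: sA => DA sA; case/andP: sN => nD sN; case/andP => gCD pth' gC.
  have nCD : ~~ ((C \in [:: A1; A2]) && (D \in [:: A1; A2])) by rewrite (negbTE nC).
  exact: (IH D DA nD sA sN pth' (step C D CA DA gCD nCD gC)).
have nA3 : A3 \notin [:: A1; A2].
  rewrite !inE negb_or; apply/andP; split.
    by apply: contra u1 => /eqP->; rewrite !inE eqxx orbT.
  by apply: contra u2 => /eqP->; rewrite inE eqxx.
have qN : all (fun D => D \notin [:: A1; A2]) q.
  apply/allP => D Dq; rewrite !inE negb_or; apply/andP; split.
    by apply: contra u1 => /eqP E; rewrite -E !inE Dq !orbT.
  by apply: contra u2 => /eqP E; rewrite -E inE Dq orbT.
have gA3 : good A3 by apply: step A2in A3in g23 _ gA2; rewrite (negbTE nA3) andbF.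
have gA1 := chain q A3 A3in nA3 qin qN pth gA3.
have := sep_edge t1; by rewrite tm_sym (gA1 x1 x1A1).
Qed.

Lemma tree_core : is_tree_on (A_of H B) (Gamma_rel H t B).
Proof.
split; [|exact: Gamma_connected|exact: Gamma_acyclic].
case/set0Pn: B0 => b bB; apply/set0Pn; exists (comp b); exact: comp_in.
Qed.
End Main.


End Pf.

Theorem mainTheorem15 (V : finType) (H : seq {set V}) (t : rel V) (B : {set V}) :
  edges_nonempty H -> host_tree H t -> basic_set H B ->
  is_tree_on (A_of H B) (Gamma_rel H t B).
Proof.
move=> _ [[tirr tsym] [_ tconn tacyc] Hconn] [Bce B2 _].
have B0 : B != set0 by rewrite -card_gt0 ltnW.
have [connB NB] : connected_on B t /\ NI t H B.
  case: Bce => [-> | [B1 | [Bob _]]].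
  - by split => // u v *; exact: subsetT.
  - by rewrite B1 in B2.
  - have [sB nB] := obt_inv tirr tsym tacyc Hconn Bob.
    by split => //; exact: (sep_connected tirr tsym tconn tacyc sB).
exact: (tree_core tirr tsym tacyc Hconn connB NB B0).
Qed.
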